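(* For every online learning algorithm for the Dd-MDP problem, there exists a $T$-round Dd-MDP instance (with a finite policy collection) on which the algorithm's regret is $\Omega(T)$.
   Context: Dynamic deterministic MDP (Dd-MDP): finite state set $\mathcal S$, finite action set $\mathcal X$, feasible action sets $X_s\subseteq\mathcal X$ for $s\in\mathcal S$. The game lasts $T$ rounds from initial state $s_1$. In round $t$ the decision maker plays a (possibly randomized) $x_t\in X_{s_t}$; simultaneously an adversary chooses a transition function $g_t$ and a reward function $f_t$ (defined on pairs $(s,x)$ with $x\in X_s$, rewards in $[0,1]$). Then $s_{t+1}=g_t(s_t,x_t)$, the reward is $f_t(s_t,x_t)$, and $g_t,f_t$ are revealed. A policy is $\gamma:\mathcal S\to\mathcal X$ with $\gamma(s)\in X_s$; its simulation is $s^\gamma_1=s_1$, $x^\gamma_t=\gamma(s^\gamma_t)$, $s^\gamma_{t+1}=g_t(s^\gamma_t,x^\gamma_t)$. The regret w.r.t. a finite policy set $\Gamma$ is $\max_{\gamma\in\Gamma}\sum_t f_t(s^\gamma_t,x^\gamma_t)-\sum_t\mathbb{E}[f_t(s_t,x_t)]$. *)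

(* Defs.v *)
From HB Require Import structures.
From mathcomp Require Import all_boot all_order all_algebra.
From mathcomp Require Import reals.
Set Implicit Arguments. Unset Strict Implicit. Unset Printing Implicit Defensive.
Import Order.TTheory GRing.Theory Num.Theory.
Local Open Scope ring_scope.

Section DdMDP.
Variable R : realType.

(* One past round as seen by the learner: state s_t, action x_t played,
   revealed transition g_t and revealed reward f_t. *)
Definition step (S X : finType) : Type :=
  (S * X * (S -> X -> S) * (S -> X -> R))%type.

(* An online (randomized) learning algorithm for the Dd-MDP problem: for any
   finite state/action sets, it knows the static data of the problem
   (horizon T, feasible action sets X_s, initial state s_1, policy class Gamma),
   and maps the observed history and the current state to a distribution
   (probability vector) over actions. *)
Definition algorithm : Type :=
  forall (S X : finType), nat -> (S -> {set X}) -> S -> seq {ffun S -> X} ->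
    seq (step S X) -> S -> {ffun X -> R}.

Definition valid_algorithm (A : algorithm) : Prop :=
  forall (S X : finType) (T : nat) (feas : S -> {set X}) (s1 : S)
    (Gamma : seq {ffun S -> X}) (h : seq (step S X)) (s : S),
    (forall s', feas s' != set0) ->
    let p := A S X T feas s1 Gamma h s in
    [/\ forall x, 0 <= p x, \sum_x p x = 1 & forall x, p x != 0 -> x \in feas s].

(* Expected cumulative reward of the algorithm over the rounds t, ..., t+k-1
   (rounds indexed from 0), from history h and current state s, against the
   fixed sequences g_t (transitions) and f_t (rewards). *)
Fixpoint alg_value (A : algorithm) (S X : finType) (T : nat)
    (feas : S -> {set X}) (s1 : S) (Gamma : seq {ffun S -> X})
    (g : nat -> S -> X -> S) (f : nat -> S -> X -> R)
    (k t : nat) (h : seq (step S X)) (s : S) : R :=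
  match k with
  | 0 => 0
  | k'.+1 =>
      \sum_x A S X T feas s1 Gamma h s x *
        (f t s x + alg_value A T feas s1 Gamma g f k' t.+1
                      (rcons h (s, x, g t, f t)) (g t s x))
  end.

Definition alg_reward (A : algorithm) (S X : finType) (T : nat)
    (feas : S -> {set X}) (s1 : S) (Gamma : seq {ffun S -> X})
    (g : nat -> S -> X -> S) (f : nat -> S -> X -> R) : R :=
  alg_value A T feas s1 Gamma g f T 0 [::] s1.

Fixpoint policy_state (S X : finType) (s1 : S) (g : nat -> S -> X -> S)
    (gamma : S -> X) (t : nat) : S :=
  match t with
  | 0 => s1
  | t'.+1 => let s := policy_state s1 g gamma t' in g t' s (gamma s)
  end.

Definition policy_reward (S X : finType) (T : nat) (s1 : S)
    (g : nat -> S -> X -> S) (f : nat -> S -> X -> R) (gamma : {ffun S -> X}) : R :=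
  \sum_(t < T) let s := policy_state s1 g gamma t in f t s (gamma s).

Definition regret (A : algorithm) (S X : finType) (T : nat)
    (feas : S -> {set X}) (s1 : S) (Gamma : seq {ffun S -> X})
    (g : nat -> S -> X -> S) (f : nat -> S -> X -> R) : R :=
  match Gamma with
  | [::] => 0
  | gamma0 :: _ =>
      \big[Num.max/policy_reward T s1 g f gamma0]_(gamma <- Gamma)
         policy_reward T s1 g f gamma
      - alg_reward A T feas s1 Gamma g f
  end.

(* Well-formed T-round Dd-MDP instance: nonempty feasible sets, a nonempty finite
   class of feasible policies, rewards in [0,1]. (The transitions g_t are total
   functions; their values at infeasible pairs are irrelevant.) *)
Definition wf_instance (S X : finType) (feas : S -> {set X})
    (Gamma : seq {ffun S -> X}) (f : nat -> S -> X -> R) : Prop :=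
  [/\ forall s, feas s != set0,
      Gamma != [::],
      forall gamma, gamma \in Gamma -> forall s, gamma s \in feas s
    & forall t s x, 0 <= f t s x <= 1].

End DdMDP.

(* Main.v *)
Require Import Defs.
From HB Require Import structures.
From mathcomp Require Import all_boot all_order all_algebra.
From mathcomp Require Import reals.
From mathcomp Require Import lra.
Import Order.TTheory GRing.Theory Num.Theory.
Local Open Scope ring_scope.

Section Proof.
Variable R : realType.

Definition gg (t : nat) (s x : bool) : bool := if t is 0 then x else s.
Definition ff (good : bool) (t : nat) (s x : bool) : R :=
  if t is 0 then 0 else (s == good)%:R.

Lemma value_late (A : algorithm R) (T : nat) feas s1 Gamma good
  (HA : valid_algorithm A) (Hf : forall s : bool, feas s != set0) :
  forall k t h s, (0 < t)%N ->
  alg_value A T feas s1 Gamma gg (ff good) k t h s = k%:R * (s == good)%:R.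
Proof.
elim=> [|k IH] t h s Ht /=; first by rewrite mul0r.
have [_ Hs _] := HA bool bool T feas s1 Gamma h s Hf.
under eq_bigr => x _ do rewrite IH ?(ltn_trans Ht) //.
rewrite /gg /ff; case: t Ht => // t _.

by rewrite -mulr_suml Hs mul1r -[k.+1]addn1 natrD mulrDl mul1r addrC.
Qed.

Lemma policy_state_const (gm : bool -> bool) (b : bool) t :
  (forall s, gm s = b) -> (0 < t)%N -> policy_state false gg gm t = b.
Proof.
move=> Hg; elim: t => // [[|t]] IH _ /=; first by rewrite Hg.
by rewrite /= in IH; rewrite IH.
Qed.

End Proof.

Theorem proposition1 (R : realType) (A : algorithm R) :
  valid_algorithm A ->
  exists c : R, 0 < c /\
  exists T0 : nat, forall T : nat, (T0 <= T)%N ->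
    exists (S X : finType) (feas : S -> {set X}) (s1 : S)
           (Gamma : seq {ffun S -> X}) (g : nat -> S -> X -> S) (f : nat -> S -> X -> R),
      wf_instance feas Gamma f /\
      c * T%:R <= regret A T feas s1 Gamma g f.
Proof.
move=> HA.
exists (1/4); split; first lra.
exists 2%N => T HT; case: T HT => // T' HT.
pose feas := fun _ : bool => [set: bool].
pose gf : {ffun bool -> bool} := [ffun=> false].
pose gt : {ffun bool -> bool} := [ffun=> true].
pose Gamma := [:: gf; gt].
have Hfe : forall s : bool, feas s != set0.
  by move=> s; apply/set0Pn; exists true; rewrite in_setT.
pose p := A bool bool T'.+1 feas false Gamma [::] false.
pose good := ~~ (1/2 < p true).
exists bool, bool, feas, false, Gamma, gg, (ff R good).
split.
  split => //.
    by move=> gm _ s; rewrite in_setT.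
  move=> [|t] s x; rewrite /ff ?lexx ?ler01 //.
  by case: (s == good); rewrite ?lexx ?ler01.
have [Hp0 Hp1 _] := HA bool bool T'.+1 feas false Gamma [::] false Hfe.

have Hpol : forall b : bool, policy_reward T'.+1 false gg (ff R good) [ffun=> b]
   = T'%:R * (b == good)%:R.
  move=> b; rewrite /policy_reward big_ord_recl.
  rewrite [X in X + _]/ff add0r.
  rewrite (eq_bigr (fun _ => (b == good)%:R)); last first.
    move=> i _; rewrite (@policy_state_const _ b); last first.
    - by rewrite lift0.
    - by move=> ?; rewrite ffunE.
    by rewrite ffunE /ff lift0.
  by rewrite sumr_const card_ord mulr_natl.
have Halg : alg_reward A T'.+1 feas false Gamma gg (ff R good) = p good * T'%:R.
  rewrite /alg_reward /=.
  under eq_bigr => x _ do rewrite value_late //.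
  rewrite /ff /gg.
  under eq_bigr => x _ do rewrite add0r.
  rewrite big_bool /= -/p.
  by case: (good); rewrite /= !mulr1 !mulr0 ?addr0 ?add0r.
have Hpg : p good <= 1/2.
  move: Hp1; rewrite big_bool /= => Hp1.
  rewrite /good; case: ltP => H /=; move: H Hp1; move: (p true) (p false) => a b;
    clear; move=> *; lra.
rewrite /regret Halg /Gamma; cbv iota; rewrite !big_cons big_nil.
have Hmax : T'%:R <= Num.max (policy_reward T'.+1 false gg (ff R good) gf)
      (Num.max (policy_reward T'.+1 false gg (ff R good) gt)
        (policy_reward T'.+1 false gg (ff R good) gf)).
  rewrite !Hpol; case: (good); rewrite /= !mulr1 !mulr0 ?le_max ?lexx ?orbT //.
have HT1 : 1 <= T'%:R :> R by rewrite ler1n.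
have Hp0g := Hp0 good.
have -> : T'.+1%:R = T'%:R + 1 :> R by rewrite -addn1 natrD.
move: Hmax Hp0g Hpg HT1; move: (Num.max _ _) (p good) (T'%:R : R) => M q t.
clear; move=> *; nra.
Qed.
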